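(* For each $n$, let $K=K(n)$ be a kernel, $k=k(n)\in\mathbb N$, and $C=C(K,k)$ a uniformly random core with kernel $K$ and $|V(K)|+k$ vertices. If $|E(K)|=o(k)$ and $|E(K)|=(3/2+o(1))|V(K)|$, then $C$ rooted at a uniformly random vertex of $V(C)$ converges in the local weak sense to $\mathcal P_2$, and $C$ rooted at a uniformly random vertex of $V(K)$ converges in the local weak sense to $\mathcal P_3$.
   Context: A kernel is a multigraph (loops and multiple edges allowed) of minimum degree at least three; a core has minimum degree at least two; a core has kernel $K$ if $K$ arises from it by replacing every maximal path with all internal vertices of degree two by an edge, equivalently the core is obtained from $K$ by subdividing edges. $C(K,k)$ is uniform among cores with kernel $K$ and $k$ additional vertices. $\mathcal P_k$ is the (deterministic) rooted tree in which the root has degree $k$ and all other vertices have degree two. Local weak convergence $G_n\to G_0$: for all finite rooted $(H,r_H)$ and $\ell\in\mathbb N$, $\Pr[B_\ell(G_n)\cong(H,r_H)]\to\Pr[B_\ell(G_0)\cong(H,r_H)]$. *)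

(* Defs.v *)
From HB Require Import structures.
From mathcomp Require Import all_boot all_order all_algebra.
From Stdlib Require Import ClassicalEpsilon.
Set Implicit Arguments. Unset Strict Implicit. Unset Printing Implicit Defensive.
Import Order.TTheory GRing.Theory Num.Theory.

(* A multigraph: a vertex type, an edge type, and for each edge its (unordered)
   pair of endpoints, recorded as an ordered pair; a loop has equal endpoints. *)
Record mgraph := MGraph { gV : Type; gE : Type; gends : gE -> gV * gV }.

Record fmgraph := FMGraph { fV : finType; fE : finType; fends : fE -> fV * fV }.

Definition mgraph_of_fmgraph (H : fmgraph) : mgraph := MGraph (@fends H).

Definition joins (G : mgraph) (e : gE G) (u v : gV G) : Prop :=
  gends e = (u, v) \/ gends e = (v, u).

Fixpoint within (G : mgraph) (r : gV G) (l : nat) (v : gV G) : Prop :=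
  match l with
  | 0 => v = r
  | l'.+1 => within r l' v \/ exists (u : gV G) (e : gE G), within r l' u /\ joins e u v
  end.

(* The ball B_l(G, r) is the subgraph induced by the vertices at distance <= l
   from r (all edges with both endpoints in the ball), rooted at r. *)
Definition ball_iso (G : mgraph) (r : gV G) (l : nat) (H : fmgraph) (rH : fV H) : Prop :=
  exists (f : fV H -> gV G) (g : fE H -> gE G),
    injective f /\
    (forall v : gV G, within r l v <-> exists x, f x = v) /\
    f rH = r /\
    injective g /\
    (forall e : gE G, (within r l (gends e).1 /\ within r l (gends e).2)
                      <-> exists y, g y = e) /\
    (forall y : fE H, joins (g y) (f (fends y).1) (f (fends y).2)).

(* Root = None; Some (i, j) is the vertex at distance j+1 on the i-th ray. *)
Definition P_ends (d : nat) (e : 'I_d * nat) : option ('I_d * nat) * option ('I_d * nat) :=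
  match e.2 with
  | 0 => (None, Some (e.1, 0))
  | j.+1 => (Some (e.1, j), Some (e.1, j.+1))
  end.

Definition P_graph (d : nat) : mgraph := MGraph (@P_ends d).
Definition P_root (d : nat) : gV (P_graph d) := None.

Record kgraph := KGraph { kv : nat; ke : nat; kends : 'I_ke -> 'I_kv * 'I_kv }.

(* degree; a loop contributes 2 *)
Definition kdeg (K : kgraph) (v : 'I_(kv K)) : nat :=
  #|[set e | (kends e).1 == v]| + #|[set e | (kends e).2 == v]|.

Definition is_kernel (K : kgraph) : Prop := forall v : 'I_(kv K), 3 <= kdeg v.

(* A core with kernel K and k additional vertices is obtained by subdividing
   each edge e of K by a e new vertices, with \sum_e a e = k. *)
Definition compositions (K : kgraph) (k : nat) : {set {ffun 'I_(ke K) -> 'I_k.+1}} :=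
  [set a : {ffun 'I_(ke K) -> 'I_k.+1} | \sum_(e < ke K) (a e : nat) == k].

Section Core.
Variables (K : kgraph) (k : nat) (a : {ffun 'I_(ke K) -> 'I_k.+1}).

(* the j-th new vertex on edge e exists iff j < a e *)
Definition core_new : finType := {p : 'I_(ke K) * 'I_k.+1 | (p.2 : nat) < a p.1}.
Definition core_V : finType := ('I_(kv K) + core_new)%type.
(* edge e of K becomes the path with a e + 1 edges, numbered 0..a e *)
Definition core_E : finType := {p : 'I_(ke K) * 'I_k.+2 | (p.2 : nat) <= a p.1}.

(* the j-th point (0 <= j <= a e + 1) along the path replacing e *)
Definition core_pt (e : 'I_(ke K)) (j : nat) : core_V :=
  if j == 0 then inl (kends e).1
  else match insub ((e, inord j.-1) : 'I_(ke K) * 'I_k.+1) with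
       | Some x => inr x
       | None => inl (kends e).2
       end.

Definition core_ends (x : core_E) : core_V * core_V :=
  (core_pt (sval x).1 (sval x).2, core_pt (sval x).1 (sval x).2.+1).

Definition core_graph : mgraph := MGraph core_ends.
End Core.

Local Open Scope ring_scope.

Definition pb (P : Prop) : bool := if excluded_middle_informative P then true else false.

(* Pr[ B_l(C, root) ~= (H, rH) ] where C = C(K,k) is uniform (uniform a) and the
   root is a uniformly random vertex of V(C). *)
Definition prob_ball_VC (K : kgraph) (k l : nat) (H : fmgraph) (rH : fV H) : rat :=
  (#|compositions K k|%:R)^-1 *
  \sum_(a in compositions K k)
     (#|[set v : core_V a | pb (@ball_iso (core_graph a) v l H rH)]|%:R
      / #|core_V a|%:R).

(* Same, with the root a uniformly random vertex of V(K) (a subset of V(C)). *)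
Definition prob_ball_VK (K : kgraph) (k l : nat) (H : fmgraph) (rH : fV H) : rat :=
  (#|compositions K k|%:R)^-1 *
  \sum_(a in compositions K k)
     (#|[set v : 'I_(kv K) | pb (@ball_iso (core_graph a) (inl v) l H rH)]|%:R
      / (kv K)%:R).

Definition cvg_rat (u : nat -> rat) (L : rat) : Prop :=
  forall eps : rat, 0 < eps -> exists N, forall n, (N <= n)%N -> `|u n - L| < eps.

(* Local weak convergence to the deterministic rooted graph (P_d, root):
   for every finite rooted (H, rH) and l, Pr[B_l(G_n) ~= (H,rH)] tends to
   Pr[B_l(P_d) ~= (H,rH)], which is 1 or 0. *)
Definition lwc_to_P (p : nat -> nat -> forall H : fmgraph, fV H -> rat) (d : nat) : Prop :=
  forall (H : fmgraph) (rH : fV H) (l : nat),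
    cvg_rat (fun n => p n l H rH)
            (if pb (@ball_iso (P_graph d) (P_root d) l H rH) then 1 else 0).

(* Main.v *)
Require Import Defs.
From HB Require Import structures.
From mathcomp Require Import all_boot all_order all_algebra.
From Stdlib Require Import ClassicalEpsilon.
From mathcomp Require Import zify ring lra.
Import Order.TTheory GRing.Theory Num.Theory.
Set Implicit Arguments. Unset Strict Implicit. Unset Printing Implicit Defensive.

Definition pchoose {A B : Type} (P : A -> Prop) (F : A -> B) (dflt : B) : B :=
  match excluded_middle_informative (exists x, P x) with
  | left H => F (proj1_sig (constructive_indefinite_description _ H))
  | right _ => dflt end.

Lemma pchooseP {A B : Type} (P : A -> Prop) (F : A -> B) dflt :
  (exists x, P x) -> exists x, P x /\ pchoose P F dflt = F x.
Proof.
move=> H; rewrite /pchoose; case: excluded_middle_informative => // H'.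
case: (constructive_indefinite_description _ H') => x Px /=.
by exists x.
Qed.

Lemma joins2 (G : mgraph) (e : gE G) x y x' y' :
  joins e x y -> joins e x' y' -> (x = x' /\ y = y') \/ (x = y' /\ y = x').
Proof.
rewrite /joins; case: (gends e) => a b.
by case=> [[-> ->]|[-> ->]] [[-> ->]|[-> ->]]; auto.
Qed.

Record ray_struct (G : mgraph) (r : gV G) (d l : nat)
   (rho : 'I_d -> nat -> gV G) (sig : 'I_d -> nat -> gE G) : Prop := RayS {
  rs_d : (0 < d)%N;
  rs_r : forall i, rho i 0 = r;
  rs_j : forall i j, (j <= l)%N -> joins (sig i j) (rho i j) (rho i j.+1);
  rs_inj : forall i j i' j', (j <= l.+1)%N -> (j' <= l.+1)%N -> rho i j = rho i' j' ->
             (j = 0 /\ j' = 0) \/ (i = i' /\ j = j');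
  rs_sinj : forall i j i' j', (j < l)%N -> (j' < l)%N -> sig i j = sig i' j' -> i = i' /\ j = j';
  rs_nb : forall i j e u, (j <= l)%N -> joins e (rho i j) u ->
             exists a b, (b <= j)%N /\ e = sig a b }.

Section RayLemmas.
Variables (G : mgraph) (r : gV G) (d l : nat)
   (rho : 'I_d -> nat -> gV G) (sig : 'I_d -> nat -> gE G).
Hypothesis RS : ray_struct r l rho sig.

Lemma rs_within m : (m <= l)%N -> forall w, within r m w <-> exists i j, (j <= m)%N /\ w = rho i j.
Proof.
case: RS => d0 Hr Hj Hinj Hsinj Hnb.
elim: m => [|m IH] Hm w /=.
  split.
    move=> ->; exists (Ordinal d0), 0; split => //; by rewrite Hr.
  by case=> i [j [Hj0 ->]]; move: Hj0; rewrite leqn0 => /eqP ->; rewrite Hr.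
have Hm' : (m <= l)%N by apply: ltnW.
split.
  case.
    by move/(IH Hm') => [i [j [Hjm ->]]]; exists i, j; split => //; apply: leqW.
  move=> [u [e [/(IH Hm') [i [j [Hjm ->]]] Hjn]]].
  have [a [b [Hbj He]]] := Hnb i j e w (leq_trans Hjm Hm') Hjn.
  have Hbl : (b <= l)%N by apply: leq_trans Hbj (leq_trans Hjm Hm').
  have := Hj a b Hbl. rewrite -He => Hj'.
  case: (joins2 Hjn Hj') => [[_ ->]|[_ ->]]; exists a.
    exists b.+1; split => //. by apply: leq_ltn_trans Hbj _.
  exists b; split => //. apply: leqW (leq_trans Hbj Hjm).
case=> i [j [Hjm ->]].
case: (ltngtP j m.+1) => Hjm'.
  left; apply/(IH Hm'); exists i, j; split => //.
  by move: Hjm Hjm'; lia.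
subst j; right; exists (rho i m), (sig i m); split.
  by apply/(IH Hm'); exists i, m.
by apply: Hj.
Qed.

Lemma rs_edge e : (within r l (gends e).1 /\ within r l (gends e).2) <->
   exists i j, (j < l)%N /\ e = sig i j.
Proof.
have Hw := rs_within (leqnn l).
case: RS => d0 Hr Hj Hinj Hsinj Hnb.
split.
  case=> /Hw [i [j [Hjl E1]]] /Hw [i' [j' [Hjl' E2]]].
  have Jn : joins e (rho i j) (rho i' j') by left; rewrite -E1 -E2; case: (gends e).
  have [a [b [Hbj He]]] := Hnb i j e _ Hjl Jn.
  have Hbl : (b <= l)%N by apply: leq_trans Hbj Hjl.
  case: (ltngtP b l) => Hb; first by exists a, b.
    by move: Hb Hbl; lia.
  subst b.
  have := Hj a l (leqnn l); rewrite -He => J2.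
  exfalso.
  case: (joins2 Jn J2) => [[_ E]|[E _]].
    by case: (Hinj _ _ _ _ (leqW Hjl') (leqnn _) E) => [[_ //]|[_ E']]; move: E' Hjl'; lia.
  by case: (Hinj _ _ _ _ (leqW Hjl) (leqnn _) E) => [[_ //]|[_ E']]; move: E' Hjl; lia.
case=> i [j [Hjl ->]].
have := Hj i j (ltnW Hjl).
rewrite /joins => -[->|->] /=; split; apply/Hw.
- by exists i, j; split => //; apply: ltnW.
- by exists i, j.+1.
- by exists i, j.+1.
- by exists i, j; split => //; apply: ltnW.
Qed.

End RayLemmas.

Lemma ray_transfer (G1 G2 : mgraph) (r1 : gV G1) (r2 : gV G2) (d l : nat)
   (rho1 : 'I_d -> nat -> gV G1) sig1 (rho2 : 'I_d -> nat -> gV G2) sig2 (H : fmgraph) (rH : fV H) :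
  ray_struct r1 l rho1 sig1 -> ray_struct r2 l rho2 sig2 ->
  ball_iso r1 l rH -> ball_iso r2 l rH.
Proof.
move=> RS1 RS2 [f [g [finj [fon [fr [ginj [gon gj]]]]]]].
have W1 := rs_within RS1 (leqnn l). have W2 := rs_within RS2 (leqnn l).
have E1 := rs_edge RS1. have E2 := rs_edge RS2.
case: RS1 => d0 Hr1 Hj1 Hinj1 Hsinj1 Hnb1.
case: RS2 => _ Hr2 Hj2 Hinj2 Hsinj2 Hnb2.
pose i0 := Ordinal d0.
pose Phi (w : gV G1) : gV G2 :=
  pchoose (fun p : 'I_d * nat => (p.2 <= l)%N /\ rho1 p.1 p.2 = w) (fun p => rho2 p.1 p.2) r2.
pose Phe (e : gE G1) : gE G2 :=
  pchoose (fun p : 'I_d * nat => (p.2 < l)%N /\ sig1 p.1 p.2 = e) (fun p => sig2 p.1 p.2) (sig2 i0 0).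
have Phi_rho : forall i j, (j <= l)%N -> Phi (rho1 i j) = rho2 i j.
  move=> i j Hj.
  have [[a b] [[/= Hb Hab] ->]] : exists x, ((x.2 <= l)%N /\ rho1 x.1 x.2 = rho1 i j) /\ Phi (rho1 i j) = rho2 x.1 x.2.
    by apply: pchooseP; exists (i, j).
  simpl.
  case: (Hinj1 _ _ _ _ (leqW Hb) (leqW Hj) Hab) => [[-> ->]|[-> ->]] //.
  by rewrite !Hr2.
have Phe_sig : forall i j, (j < l)%N -> Phe (sig1 i j) = sig2 i j.
  move=> i j Hj.
  have [[a b] [[/= Hb Hab] ->]] : exists x, ((x.2 < l)%N /\ sig1 x.1 x.2 = sig1 i j) /\ Phe (sig1 i j) = sig2 x.1 x.2.
    by apply: pchooseP; exists (i, j).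
  by case: (Hsinj1 _ _ _ _ Hb Hj Hab) => -> ->.
have fin : forall x, exists i j, (j <= l)%N /\ f x = rho1 i j.
  by move=> x; apply/W1/fon; exists x.
have gin : forall y, exists i j, (j < l)%N /\ g y = sig1 i j.
  by move=> y; apply/E1/gon; exists y.
exists (fun x => Phi (f x)), (fun y => Phe (g y)).
split.
  move=> x y.
  have [i [j [Hj Ex]]] := fin x. have [i' [j' [Hj' Ey]]] := fin y.
  rewrite Ex Ey !Phi_rho // => E.
  apply: finj; rewrite Ex Ey.
  case: (Hinj2 _ _ _ _ (leqW Hj) (leqW Hj') E) => [[-> ->]|[-> ->]] //.
  by rewrite !Hr1.
split.
  move=> v; split.
    move/W2 => [i [j [Hj ->]]].
    have [x Hx] : exists x, f x = rho1 i j by apply/fon/W1; exists i, j.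
    by exists x; rewrite Hx Phi_rho.
  case=> x <-.
  have [i [j [Hj ->]]] := fin x.
  by rewrite Phi_rho //; apply/W2; exists i, j.
split.
  have [i [j [Hj Ex]]] := fin rH.
  rewrite Ex Phi_rho //.
  have : within r1 l (rho1 i j) by rewrite -Ex fr; apply/W1; exists i, 0; rewrite Hr1.
  move=> _.
  have Hrw : f rH = rho1 i 0 by rewrite fr Hr1.
  rewrite Ex in Hrw.
  case: (Hinj1 _ _ _ _ (leqW Hj) (leq0n _) Hrw) => [[-> _]|[_ ->]]; by rewrite Hr2.
split.
  move=> x y.
  have [i [j [Hj Ex]]] := gin x. have [i' [j' [Hj' Ey]]] := gin y.
  rewrite Ex Ey !Phe_sig // => E.
  apply: ginj; rewrite Ex Ey.
  by case: (Hsinj2 _ _ _ _ Hj Hj' E) => -> ->.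
split.
  move=> e; split.
    move/E2 => [i [j [Hj ->]]].
    have [y Hy] : exists y, g y = sig1 i j by apply/gon/E1; exists i, j.
    by exists y; rewrite Hy Phe_sig.
  case=> y <-.
  have [i [j [Hj ->]]] := gin y.
  by rewrite Phe_sig //; apply/E2; exists i, j.
move=> y.
have [i [j [Hj Ey]]] := gin y.
have J := gj y. rewrite Ey in J.
have J1 := Hj1 i j (ltnW Hj).
have J2 := Hj2 i j (ltnW Hj).
rewrite Ey Phe_sig //.
case: (joins2 J1 J) => [[<- <-]|[<- <-]].
  by rewrite !Phi_rho //; apply: ltnW.
rewrite !Phi_rho //; last by apply: ltnW.
by move: J2; rewrite /joins; case; [right|left].
Qed.

Definition Prho (d : nat) (i : 'I_d) (j : nat) : gV (P_graph d) :=
  match j with 0 => None | j'.+1 => Some (i, j') end.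
Definition Psig (d : nat) (i : 'I_d) (j : nat) : gE (P_graph d) := (i, j).

Lemma P_ray d l : (0 < d)%N -> ray_struct (P_root d) l (@Prho d) (@Psig d).
Proof.
move=> d0; split => //.
- by move=> i j _; left; case: j.
- move=> i [|j] i' [|j'] _ _ //=; [by left | by case=> -> ->; right].
- by move=> i j i' j' _ _ [-> ->].
- move=> i j [a b] u _ Hj; exists a, b; split => //.
  move: Hj; rewrite /joins /= /P_ends /=.
  case: b => [|b] /=; case: j => [|j] //=.
  all: move=> [] [] //; lia.
Qed.

Lemma ray_pb (G : mgraph) (r : gV G) d l rho sig (H : fmgraph) (rH : fV H) :
  @ray_struct G r d l rho sig ->
  pb (@ball_iso G r l H rH) = pb (@ball_iso (P_graph d) (P_root d) l H rH).
Proof.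
move=> RS.
have PR := P_ray l (rs_d RS).
rewrite /pb; case: excluded_middle_informative => h1; case: excluded_middle_informative => h2 //.
  by case: h2; apply: ray_transfer RS PR h1.
by case: h1; apply: ray_transfer PR RS h2.
Qed.

Section CoreFacts.
Variables (K : kgraph) (k : nat) (a : {ffun 'I_(ke K) -> 'I_k.+1}).
Local Notation pt := (@core_pt K k a).

Lemma ae_le e : (a e <= k)%N.
Proof. by have := ltn_ord (a e); rewrite ltnS. Qed.

Lemma pt0 e : pt e 0 = inl (kends e).1.
Proof. by rewrite /core_pt. Qed.

Lemma ptN e : pt e (a e).+1 = inl (kends e).2.
Proof.
rewrite /core_pt /=; rewrite insubF //= inordK ?ltnS ?ae_le //.
by rewrite ltnn.
Qed.

Lemma ptI e m : (0 < m)%N -> (m <= a e)%N ->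
  exists q : core_new a, pt e m = inr q /\ sval q = (e, inord m.-1).
Proof.
move=> m0 ma; rewrite /core_pt; case: m m0 ma => [|m] // _ ma /=.
have P : (inord m : 'I_k.+1) < a e.
  by rewrite /= inordK // ltnS; apply: leq_trans (ltnW ma) (ae_le e).
case: insubP => [q Pq Eq|nP]; first by exists q.
by rewrite /= P in nP.
Qed.

Lemma pt_inl e m v : (m <= (a e).+1)%N -> pt e m = inl v ->
  (m = 0 /\ (kends e).1 = v) \/ (m = (a e).+1 /\ (kends e).2 = v).
Proof.
move=> Hm.
case: m Hm => [|m] Hm; first by rewrite pt0 => -[<-]; left.
case: (ltngtP m (a e)) => H.
- by have [q [-> _]] := ptI (m:=m.+1) (ltn0Sn _) H.
- by move: Hm H; lia.
- by subst m; rewrite ptN => -[<-]; right.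
Qed.

Lemma pt_inj e m e' m' : (0 < m)%N -> (m <= a e)%N -> (m' <= (a e').+1)%N ->
  pt e' m' = pt e m -> e' = e /\ m' = m.
Proof.
move=> m0 ma Hm'.
have [q [-> Hq]] := ptI m0 ma.
case: (posnP m') => [->|m'0]; first by rewrite pt0.
case: (ltngtP m' (a e').+1) => H.
- have [q' [-> Hq']] := ptI m'0 (H : (m' <= a e')%N).
  move=> [Eq]; move: Hq'; rewrite Eq Hq => -[-> /(congr1 val)].
  have ha := ae_le e. have ha' := ae_le e'.
  rewrite /= !inordK; try lia.
  move=> E; split=> //; lia.
- by move: Hm' H; lia.
- by subst m'; rewrite ptN.
Qed.

Lemma pt_inj' e m e' m' : pt e' m' = pt e m -> (0 < m)%N -> (m <= a e)%N -> (m' <= (a e').+1)%N ->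
  e' = e /\ m' = m.
Proof. by move=> E H1 H2 H3; apply: pt_inj E. Qed.

Lemma mkE_proof e j : ((inord (minn j (a e)) : 'I_k.+2) <= a e)%N.
Proof. have h := ae_le e. rewrite inordK; lia. Qed.

Definition mkE e j : core_E a := exist _ (e, inord (minn j (a e))) (mkE_proof e j).

Lemma mkE_ends e j : (j <= a e)%N -> gends (mkE e j : gE (core_graph a)) = (pt e j, pt e j.+1).
Proof.
move=> H; rewrite /= /core_ends /= inordK; last by have := ae_le e; lia.
by rewrite (minn_idPl H).
Qed.

Lemma mkE_inj e j e' j' : (j <= a e)%N -> (j' <= a e')%N -> mkE e j = mkE e' j' -> e = e' /\ j = j'.
Proof.
move=> H H' E.
have E1 := congr1 (fun x : core_E a => (sval x).1) E.
have E2 := congr1 (fun x : core_E a => nat_of_ord (sval x).2) E.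
simpl in E1, E2.
have h := ae_le e; have h' := ae_le e'.
rewrite !inordK in E2; try lia.
split => //; lia.
Qed.

Lemma mkE_inj' e j e' j' : mkE e j = mkE e' j' -> (j <= a e)%N -> (j' <= a e')%N -> e = e' /\ j = j'.
Proof. by move=> E H1 H2; apply: mkE_inj E. Qed.

Lemma edge_cover (x : core_E a) : exists e j, (j <= a e)%N /\ x = mkE e j.
Proof.
case: x => [[e j] Hj]; exists e, j; split => //.
apply: val_inj => /=; congr (_, _); apply: val_inj => /=.
by rewrite (minn_idPl Hj) inordK //; have := ae_le e; lia.
Qed.

Lemma joins_core (x : gE (core_graph a)) w u : joins x w u ->
  exists e j, (j <= a e)%N /\ x = mkE e j /\ (w = pt e j \/ w = pt e j.+1).
Proof.
have [e [j [Hj ->]]] := edge_cover x.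
rewrite /joins mkE_ends // => -[[<- _]|[_ <-]]; by exists e, j; auto.
Qed.

End CoreFacts.

Section VC.
Variables (K : kgraph) (k : nat) (a : {ffun 'I_(ke K) -> 'I_k.+1}) (l : nat).
Local Notation pt := (@core_pt K k a).

Lemma pt_q (q : core_new a) : pt (sval q).1 (sval q).2.+1 = inr q.
Proof.
have Hq := valP q. simpl in Hq.
have [q' [-> Hq']] := ptI (m := (sval q).2.+1) (ltn0Sn _) Hq.
congr inr; apply: val_inj; change (sval q' = sval q); rewrite Hq' /=.
case: (sval q) => e t /=; congr (_, _); apply: val_inj; rewrite /= inordK //.
Qed.

Variables (q : core_new a).
Let e := (sval q).1.
Let t : nat := (sval q).2.
Hypothesis Ht1 : (l < t)%N.
Hypothesis Ht2 : (t + l + 2 <= a e)%N.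

Definition rhoC (i : 'I_2) (j : nat) : core_V a :=
  if val i == 0 then pt e (t.+1 + j) else pt e (t.+1 - j).
Definition sigC (i : 'I_2) (j : nat) : core_E a :=
  if val i == 0 then mkE a e (t.+1 + j) else mkE a e (t.+1 - j.+1).

Lemma VC_ray : @ray_struct (core_graph a) (inr q) 2 l rhoC sigC.
Proof.
split => //.
- by move=> i; rewrite /rhoC addn0 subn0; case: ifP => _; exact: (pt_q q).
- move=> [[|[|i]] Hi] j Hj //=; rewrite /rhoC /sigC /=.
    rewrite /joins mkE_ends; first by left; rewrite addnS.
    lia.
  rewrite /joins mkE_ends; last by lia.
  right; congr (_, _); congr (pt _ _); lia.
- move=> [[|[|i]] Hi] j [[|[|i']] Hi'] j' Hj Hj' //=; rewrite /rhoC /= => E.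
  + have [_ E'] := pt_inj' E ltac:(lia) ltac:(lia) ltac:(lia).
    right; split; [exact: val_inj|lia].
  + have [_ E'] := pt_inj' E ltac:(lia) ltac:(lia) ltac:(lia).
    left; lia.
  + have [_ E'] := pt_inj' E ltac:(lia) ltac:(lia) ltac:(lia).
    left; lia.
  + have [_ E'] := pt_inj' E ltac:(lia) ltac:(lia) ltac:(lia).
    right; split; [exact: val_inj|lia].
- move=> [[|[|i]] Hi] j [[|[|i']] Hi'] j' Hj Hj' //=; rewrite /sigC /= => E.
  + have [_ E'] := mkE_inj' E ltac:(lia) ltac:(lia).
    split; [exact: val_inj|lia].
  + have [_ E'] := mkE_inj' E ltac:(lia) ltac:(lia). lia.
  + have [_ E'] := mkE_inj' E ltac:(lia) ltac:(lia). lia.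
  + have [_ E'] := mkE_inj' E ltac:(lia) ltac:(lia).
    split; [exact: val_inj|lia].
- move=> i j x u Hj /joins_core [e' [c [Hc [-> Hw]]]].
  have Hm : forall m, (0 < m)%N -> (m <= a e)%N -> (pt e' c = pt e m \/ pt e' c.+1 = pt e m) ->
      e' = e /\ (c = m \/ c.+1 = m).
    move=> m m0 ma [E|E].
      by have [-> ->] := pt_inj' E m0 ma ltac:(lia); auto.
    by have [-> ->] := pt_inj' E m0 ma ltac:(lia); auto.
  pose o0 : 'I_2 := ord0. pose o1 : 'I_2 := Ordinal (isT : (1 < 2)%N).
  move: Hw; case: i => [[|[|i]] Hi] //=; rewrite /rhoC /= => Hw.
  + have [E [Ec|Ec]] := Hm (t.+1 + j) (ltn0Sn _) (ltac:(lia)) (ltac:(case: Hw; auto)); subst e'.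
      by exists o0, j; split => //; rewrite /sigC /= Ec.
    case: j Hj Ec Hw => [|j] Hj Ec Hw.
      by exists o1, 0; split => //; rewrite /sigC /=; congr (mkE a _ _); lia.
    by exists o0, j; split => //; rewrite /sigC /=; congr (mkE a _ _); lia.
  + have [E [Ec|Ec]] := Hm (t.+1 - j) (ltac:(lia)) (ltac:(lia)) (ltac:(case: Hw; auto)); subst e'.
      case: j Hj Ec Hw => [|j] Hj Ec Hw.
        by exists o0, 0; split => //; rewrite /sigC /=; congr (mkE a _ _); lia.
      by exists o1, j; split => //; rewrite /sigC /=; congr (mkE a _ _); lia.
    by exists o1, j; split => //; rewrite /sigC /=; congr (mkE a _ _); lia.
Qed.
End VC.

Section VK.
Variables (K : kgraph) (k : nat) (a : {ffun 'I_(ke K) -> 'I_k.+1}) (l : nat).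
Local Notation pt := (@core_pt K k a).
Variables (v : 'I_(kv K)) (e0 : 'I_(ke K)).
Hypothesis Hdeg : kdeg v = 3.
Hypothesis Hlong : forall e, ((kends e).1 = v \/ (kends e).2 = v) -> (l.*2 + 3 <= a e)%N.

Definition hs : seq ('I_(ke K) * bool) :=
  [seq (e, true) | e <- enum [set e | (kends e).1 == v]] ++
  [seq (e, false) | e <- enum [set e | (kends e).2 == v]].

Lemma size_hs : size hs = 3.
Proof. by rewrite size_cat !size_map -!cardE -Hdeg. Qed.

Lemma uniq_hs : uniq hs.
Proof.
rewrite cat_uniq !map_inj_uniq ?enum_uniq //=; try by move=> x y [].
rewrite andbT; apply/hasPn => -[e b] /mapP [e' _ [_ ->]].
by apply/negP => /mapP [? _ []].
Qed.

Lemma mem_hs e b : ((e, b) \in hs) = (if b then (kends e).1 == v else (kends e).2 == v).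
Proof.
rewrite mem_cat; case: b.
  rewrite orbC; have -> : ((e,true) \in [seq (e0, false) | e0 <- enum [set e | (kends e).2 == v]]) = false.
    by apply/negP => /mapP [? _ []].
  by rewrite mem_map ?mem_enum ?inE //; move=> x y [].
have -> : ((e,false) \in [seq (e0, true) | e0 <- enum [set e | (kends e).1 == v]]) = false.
  by apply/negP => /mapP [? _ []].
by rewrite mem_map ?mem_enum ?inE //; move=> x y [].
Qed.

Definition h (i : 'I_3) := nth (e0, true) hs i.

Lemma h_mem i : h i \in hs.
Proof. by apply: mem_nth; rewrite size_hs. Qed.

Lemma h_inc i : (kends (h i).1).1 = v \/ (kends (h i).1).2 = v.
Proof.
have := h_mem i; case: (h i) => e [] /=; rewrite mem_hs => /eqP; auto.
Qed.

Lemma h_inj i i' : h i = h i' -> i = i'.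
Proof.
move=> E; apply: val_inj; apply/eqP.
by rewrite -(nth_uniq (e0,true) _ _ uniq_hs) ?size_hs ?ltn_ord //; apply/eqP.
Qed.

Lemma h_idx x : x \in hs -> exists i, h i = x.
Proof.
move=> Hx; have Hi : (index x hs < 3)%N by rewrite -size_hs index_mem.
by exists (Ordinal Hi); rewrite /h nth_index.
Qed.

Definition rhoK (i : 'I_3) (j : nat) : core_V a :=
  if (h i).2 then pt (h i).1 j else pt (h i).1 ((a (h i).1).+1 - j).
Definition sigK (i : 'I_3) (j : nat) : core_E a :=
  if (h i).2 then mkE a (h i).1 j else mkE a (h i).1 (a (h i).1 - j).

Lemma pt_notinl e m x : (0 < m)%N -> (m <= a e)%N -> pt e m <> inl x.
Proof. by move=> m0 ma; have [q [-> _]] := ptI m0 ma. Qed.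

Lemma hl i : (l.*2 + 3 <= a (h i).1)%N.
Proof. by apply: Hlong; apply: h_inc. Qed.

Lemma L_r i : rhoK i 0 = inl v.
Proof.
rewrite /rhoK subn0.
have := h_mem i; case E: (h i) => [e []] /=; rewrite mem_hs => /eqP <-.
  by rewrite pt0.
by rewrite ptN.
Qed.

Definition midx (i : 'I_3) (j : nat) := if (h i).2 then j else (a (h i).1).+1 - j.

Lemma L_int i j : (0 < j)%N -> (j <= l.+1)%N ->
  [/\ (0 < midx i j)%N, (midx i j <= a (h i).1)%N & rhoK i j = pt (h i).1 (midx i j)].
Proof.
move=> j0 jl; have := hl i; rewrite /midx /rhoK; case: (h i) => e [] /= H; split => //; lia.
Qed.

Lemma VK_ray : @ray_struct (core_graph a) (inl v) 3 l rhoK sigK.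
Proof.
split => //.
- exact: L_r.
- move=> i j Hj; have := hl i; rewrite /rhoK /sigK.
  case E: (h i) => [e []] /= He.
    by rewrite /joins mkE_ends; [left|lia].
  rewrite /joins mkE_ends; last by lia.
  right; congr (_, _); congr (pt _ _); lia.
- move=> i j i' j' Hj Hj' Ev.
  case: (posnP j) => [j0|j0]; case: (posnP j') => [j'0|j'0]; first by left.
  + exfalso; subst j; rewrite L_r in Ev.
    have [m0 ma Em] := L_int i' j'0 Hj'; rewrite Em in Ev.
    exact: (pt_notinl m0 ma (esym Ev)).
  + exfalso; subst j'; rewrite L_r in Ev.
    have [m0 ma Em] := L_int i j0 Hj; rewrite Em in Ev.
    exact: (pt_notinl m0 ma Ev).
  + right.
    have [m0 ma Em] := L_int i j0 Hj; have [m0' ma' Em'] := L_int i' j'0 Hj'.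
    rewrite Em Em' in Ev.
    have [Ee Emm] := pt_inj' Ev m0' ma' (leqW ma).
    have := hl i; have := hl i'; move: Emm; rewrite /midx.
    have Hi := h_inj (i := i) (i' := i').
    move: Ee Hi; case: (h i) => e b; case: (h i') => e' b' /= Ee Hi.
    subst e'; case: b Hi; case: b' => Hi Emm H1 H2; try lia.
      by split; [apply: Hi|lia].
    by split; [apply: Hi|lia].
- move=> i j i' j' Hj Hj' Es.
  have := hl i; have := hl i'; move: Es; rewrite /sigK.
  have Hi := h_inj (i := i) (i' := i').
  move: Hi; case: (h i) => e b; case: (h i') => e' b' /= Hi.
  case: b Hi; case: b' => Hi Es H1 H2.
  + by have [Ee Ej] := mkE_inj' Es ltac:(lia) ltac:(lia); subst; split; [apply: Hi|].
  + by have [Ee Ej] := mkE_inj' Es ltac:(lia) ltac:(lia); subst; lia.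
  + by have [Ee Ej] := mkE_inj' Es ltac:(lia) ltac:(lia); subst; lia.
  + have [Ee Ej] := mkE_inj' Es ltac:(lia) ltac:(lia); subst; split; [apply: Hi|lia].
    congr (_, _); lia.
- move=> i j x u Hj /joins_core [e' [c [Hc [-> Hw]]]].
  case: (posnP j) => [j0|j0].
    subst j; rewrite L_r in Hw.
    case: Hw => Hw.
      have [[c0 E1]|[c1 _]] := pt_inl (leqW Hc) (esym Hw); last by lia.
      have [i'' Hi''] := h_idx (x := (e', true)) ltac:(by rewrite mem_hs E1).
      by exists i'', 0; split => //; rewrite /sigK Hi'' /= c0.
    have [[c0 E1]|[c1 E1]] := pt_inl (ltac:(lia) : (c.+1 <= (a e').+1)%N) (esym Hw); first by [].
    have [i'' Hi''] := h_idx (x := (e', false)) ltac:(by rewrite mem_hs E1).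
    by exists i'', 0; split => //; rewrite /sigK Hi'' /= subn0; congr (mkE a _ _); lia.
  have [m0 ma Em] := L_int i j0 (leqW Hj).
  rewrite Em in Hw.
  have [Ee Ec] : e' = (h i).1 /\ (c = midx i j \/ c.+1 = midx i j).
    case: Hw => Hw.
      by have [-> ->] := pt_inj' (esym Hw) m0 ma (leqW Hc); auto.
    by have [-> ->] := pt_inj' (esym Hw) m0 ma (ltac:(lia)); auto.
  subst e'; move: Ec Hc m0 ma; rewrite /midx /sigK.
  have := hl i.
  case E: (h i) => [e []] /= H [Ec|Ec] Hc m0 ma.
  - by exists i, j; split => //; rewrite E Ec.
  - by exists i, j.-1; split; [lia| rewrite E /=; congr (mkE a _ _); lia].
  - by exists i, j.-1; split; [lia| rewrite E /=; congr (mkE a _ _); lia].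
  - by exists i, j; split; [lia| rewrite E /=; congr (mkE a _ _); lia].
Qed.
End VK.

Section RSF.
Local Open Scope ring_scope.

Lemma frac_bound (T : finType) (P good : pred T) (b : bool) (N : nat) :
  (forall v, good v -> P v = b) -> (0 < N)%N -> #|T| = N ->
  `| (#|P|%:R / N%:R : rat) - (if b then 1 else 0)| <= #|[pred v | ~~ good v]|%:R / N%:R.
Proof.
move=> HP N0 HT.
have Nr : (0 : rat) < N%:R by rewrite ltr0n.
have HTg : (#|good| + #|[pred v | ~~ good v]| = N)%N.
  rewrite -HT -(cardC good); congr (_ + _)%N; by apply: eq_card => x.
case: b HP => HP.
- have le1 : (#|good| <= #|P|)%N by apply: subset_leq_card; apply/subsetP => x; rewrite unfold_in => /HP; rewrite unfold_in => ->.
  have le2 : (#|P| <= N)%N by rewrite -HT max_card.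
  have -> : (#|P|%:R / N%:R - 1 : rat) = - ((N - #|P|)%N%:R / N%:R).
    rewrite natrB // mulrBl divff ?gt_eqF //; ring.
  rewrite normrN ger0_norm ?divr_ge0 ?ler0n //.
  rewrite ler_pM2r ?invr_gt0 // ler_nat; lia.
- rewrite subr0 ger0_norm ?divr_ge0 ?ler0n //.
  rewrite ler_pM2r ?invr_gt0 // ler_nat.
  apply: subset_leq_card; apply/subsetP => x; rewrite unfold_in => Px.
  rewrite unfold_in /=; apply/negP => /HP E; by rewrite E in Px.
Qed.

Lemma avg_bound (T : finType) (A : {set T}) (x bd : T -> rat) (c : rat) :
  (0 < #|A|)%N -> (forall a, a \in A -> `|x a - c| <= bd a) ->
  `|(#|A|%:R)^-1 * \sum_(a in A) x a - c| <= (#|A|%:R)^-1 * \sum_(a in A) bd a.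
Proof.
move=> A0 H.
have Ar : (0 : rat) < #|A|%:R by rewrite ltr0n.
have -> : (#|A|%:R)^-1 * \sum_(a in A) x a - c = (#|A|%:R)^-1 * \sum_(a in A) (x a - c).
  rewrite big_split /= sumrN sumr_const -mulr_natl.
  by field; rewrite pnatr_eq0 -lt0n.
rewrite normrM ger0_norm ?invr_ge0 ?ler0n // ler_pM2l ?invr_gt0 //.
apply: le_trans (ler_norm_sum _ _ _) _.
by apply: ler_sum => a /H.
Qed.

End RSF.

Lemma card_lt_ord (m n : nat) : (n <= m)%N -> #|[pred t : 'I_m | (t < n)%N]| = n.
Proof.
move=> H; rewrite -sum1_card.
rewrite (eq_bigl (fun t : 'I_m => (t < n)%N)) //.
by rewrite -(big_ord_widen _ (fun _ => 1%N) H) sum1_card card_ord.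
Qed.

Section VCcount.
Variables (K : kgraph) (k : nat) (a : {ffun 'I_(ke K) -> 'I_k.+1}).

Lemma card_new : #|core_new a| = (\sum_(e < ke K) (a e : nat))%N.
Proof.
rewrite card_sig -sum1_card.
rewrite (eq_bigl (fun p : 'I_(ke K) * 'I_k.+1 => true && (p.2 < a p.1)%N)) //.
rewrite -(pair_big_dep xpredT (fun e (t : 'I_k.+1) => (t < a e)%N) (fun _ _ => 1%N)).
apply: eq_bigr => e _.
rewrite (eq_bigl (fun t : 'I_k.+1 => (t < a e)%N)) //.
rewrite -(big_ord_widen _ (fun _ => 1%N) (ltnW (ltn_ord (a e)))).
by rewrite sum1_card card_ord.
Qed.

Lemma card_coreV : a \in compositions K k -> #|core_V a| = (kv K + k)%N.
Proof.
rewrite inE => /eqP Hs.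
by rewrite card_sum card_ord card_new Hs.
Qed.

Variable l : nat.
Definition goodC (v : core_V a) : bool :=
  match v with inl _ => false
  | inr q => ((l < (sval q).2)%N && ((sval q).2 + l + 2 <= a (sval q).1)%N) end.

Lemma card_badC : (#|[pred v | ~~ goodC v]| <= kv K + ke K * (l.*2.+3))%N.
Proof.
pose code (q : core_new a) : 'I_(l.*2.+3) :=
  inord (if ((sval q).2 <= l)%N then (sval q).2 : nat else (l.+1 + (a (sval q).1 - 1 - (sval q).2))%N).
pose f (v : core_V a) : ('I_(kv K) + ('I_(ke K) * 'I_(l.*2.+3)))%type :=
  match v with inl x => inl x | inr q => inr ((sval q).1, code q) end.
rewrite -[X in (_ <= X + _)%N](card_ord (kv K)) -[X in (_ <= _ + X * _)%N](card_ord (ke K)).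
rewrite -[X in (_ <= _ + _ * X)%N](card_ord (l.*2.+3)) -card_prod -card_sum.
apply: (leq_card_in f) => [[x|q] [y|q']] Hq Hq' //= E.
- by case: E => ->.
- case: E => E1 E2.
  move: Hq Hq'; rewrite !unfold_in /=.
  move: E1 E2; rewrite /code.
  case: q => [[e t] Ht]; case: q' => [[e' t'] Ht'] /= E1 E2 Hq Hq'.
  subst e'.
  simpl in Ht, Ht'.
  have := congr1 val E2; rewrite /= !inordK; try (by rewrite -mul2n; case: ifP => ?; lia).
  move=> E3; have Et : t = t'.
    by apply: val_inj; move: E3 Hq Hq' Ht Ht'; case: ifP; case: ifP => /=; lia.
  by subst t'; congr inr; apply: val_inj.

Qed.
End VCcount.

Lemma sum_card_fib (T U : finType) (f : T -> U) :
  (\sum_(u : U) #|[set x | f x == u]|)%N = #|T|.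
Proof.
rewrite -sum1_card (partition_big f xpredT) //=.
apply: eq_bigr => u _; rewrite -sum1_card; apply: eq_bigl => x; by rewrite inE.
Qed.

Lemma sum_kdeg (K : kgraph) : (\sum_(v < kv K) kdeg v)%N = (2 * ke K)%N.
Proof.
rewrite /kdeg big_split /=.
rewrite (sum_card_fib (fun e => (kends e).1)) (sum_card_fib (fun e => (kends e).2)) card_ord.
lia.
Qed.

Lemma card_deg_bad (K : kgraph) : is_kernel K ->
  (#|[set v : 'I_(kv K) | kdeg v != 3]| + 3 * kv K <= 2 * ke K)%N.
Proof.
move=> HK; rewrite -sum_kdeg.
have -> : (3 * kv K = \sum_(v < kv K) 3)%N by rewrite sum_nat_const card_ord mulnC.
rewrite -sum1_card.
rewrite (big_mkcond (fun v => v \in [set v : 'I_(kv K) | kdeg v != 3])) /= -big_split /=.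
apply: leq_sum => v _; rewrite inE; have := HK v.
case: (kdeg v) => [|[|[|[|n]]]] //=.
Qed.

Section VKcount.
Variables (K : kgraph) (k : nat) (a : {ffun 'I_(ke K) -> 'I_k.+1}) (l : nat).

Definition incb (e : 'I_(ke K)) (v : 'I_(kv K)) := ((kends e).1 == v) || ((kends e).2 == v).

Definition goodK (v : 'I_(kv K)) : bool :=
  (kdeg v == 3) && [forall e, incb e v ==> (l.*2.+3 <= a e)%N].

Lemma card_badK :
  (#|[pred v | ~~ goodK v]| <= #|[set v : 'I_(kv K) | kdeg v != 3]| + 2 * #|[set e | (a e < l.*2.+3)%N]|)%N.
Proof.
pose S2 := [set v | [exists e, incb e v && (a e < l.*2.+3)%N]].
apply: (@leq_trans #|[set v : 'I_(kv K) | kdeg v != 3] :|: S2|).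
  apply: subset_leq_card; apply/subsetP => v; rewrite unfold_in /= /goodK negb_and !inE.
  case/orP => [->//|]; rewrite negb_forall => /existsP [e He].
  apply/orP; right; apply/existsP; exists e; move: He; rewrite negb_imply -ltnNge.
  done.
apply: leq_trans (leq_card_setU _ _) _; rewrite leq_add2l.
pose g (v : 'I_(kv K)) : option 'I_(ke K) * bool :=
  ([pick e | incb e v && (a e < l.*2.+3)%N],
   if [pick e | incb e v && (a e < l.*2.+3)%N] is Some e then (kends e).1 == v else true).
rewrite -(card_in_imset (f := g)).
  apply: leq_trans (subset_leq_card (_ : _ \subset setX (Some @: [set e | (a e < l.*2.+3)%N]) [set: bool])) _.
    apply/subsetP => _ /imsetP [v Hv ->]; rewrite inE /g.
    case: pickP => [e He|]; last first.
      by move: Hv; rewrite inE => /existsP [f Hf] /(_ f); rewrite Hf.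
    rewrite in_setT andbT; apply/imsetP; exists e => //; rewrite inE; by case/andP: He.
  rewrite cardsX card_imset ?cardsT ?card_bool; last by move=> x y [].
  by rewrite mulnC.
move=> v v' Hv Hv'; rewrite /g.
case: pickP => [e He|]; last by move: Hv; rewrite inE => /existsP [f Hf] /(_ f); rewrite Hf.
case: pickP => [e' He'|]; last by move: Hv'; rewrite inE => /existsP [f Hf] /(_ f); rewrite Hf.
case=> Ee; subst e'; move: He He'; rewrite /incb.
case/andP => /orP [/eqP E1|/eqP E1] _ /andP [/orP [/eqP E2|/eqP E2] _].
- by rewrite -E1 -E2.
- by rewrite E1 eqxx => /esym/eqP.
- by rewrite E2 eqxx => /eqP ->.
- by rewrite -E1 -E2.
Qed.
End VKcount.

Lemma sum_split2 n (f : 'I_n -> nat) e e' : e != e' ->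
  (\sum_z f z = f e + f e' + \sum_(z | (z != e) && (z != e')) f z)%N.
Proof.
move=> ne; rewrite (bigD1 e) //= (bigD1 e') /=; last by rewrite eq_sym.
by rewrite addnA.
Qed.

Section Short.
Variables (K : kgraph) (k : nat) (e : 'I_(ke K)) (m : nat).
Local Notation C := (compositions K k).
Local Notation FF := {ffun 'I_(ke K) -> 'I_k.+1}.
Definition Aset : {set FF} := [set a in C | (a e <= m)%N].

Lemma sumC (a : FF) : a \in C -> (\sum_z (a z : nat))%N = k.
Proof. by rewrite inE => /eqP. Qed.

Definition Sset : {set (FF * 'I_(ke K)) * 'I_k.+1} :=
  [set x : (FF * 'I_(ke K)) * 'I_k.+1 | [&& x.1.1 \in Aset, x.1.2 != e & ((x.2 : nat) < x.1.1 x.1.2)%N]].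

Lemma card_S : #|Sset| = (\sum_(a in Aset) \sum_(e' | e' != e) (a e' : nat))%N.
Proof.
rewrite -sum1_card.
rewrite (eq_bigl (fun x : (FF * 'I_(ke K)) * 'I_k.+1 =>
   ((x.1.1 \in Aset) && (x.1.2 != e)) && (x.2 < x.1.1 x.1.2)%N)); last first.
  by move=> x; rewrite !inE andbA.
rewrite -(pair_big_dep (fun p : FF * 'I_(ke K) => (p.1 \in Aset) && (p.2 != e))
            (fun p (u : 'I_k.+1) => (u < p.1 p.2)%N) (fun _ _ => 1%N)) /=.
rewrite (eq_bigr (fun p : FF * 'I_(ke K) => (p.1 p.2 : nat))); last first.
  move=> p _.
  rewrite (eq_bigl (fun t : 'I_k.+1 => (t < p.1 p.2)%N)) //.
  rewrite -(big_ord_widen _ (fun _ => 1%N) (ltnW (ltn_ord (p.1 p.2)))).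
  by rewrite sum1_card card_ord.
by rewrite -(pair_big_dep (fun a : FF => a \in Aset) (fun _ e' => e' != e) (fun a e' => (a e' : nat))).
Qed.

Lemma S_lower : ((k - m) * #|Aset| <= #|Sset|)%N.
Proof.
rewrite card_S mulnC -sum1_card big_distrl /=.
apply: leq_sum => a; rewrite inE => /andP [Ha Hm].
rewrite mul1n.
have E := sumC Ha; rewrite (bigD1 e) //= in E.
apply: (@leq_trans (k - a e)); first by apply: leq_sub2l.
by rewrite leq_subLR E.
Qed.

Definition fnew (a : FF) (e' : 'I_(ke K)) (u : 'I_k.+1) : FF :=
  [ffun z => if z == e then (inord (a e + a e' - u) : 'I_k.+1) else if z == e' then (inord u) else a z].

Definition phi (x : (FF * 'I_(ke K)) * 'I_k.+1) : (FF * 'I_(ke K)) * 'I_m.+1 :=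
  ((fnew x.1.1 x.1.2 x.2, x.1.2), inord (x.1.1 e)).

Lemma S_upper : (#|Sset| <= #|C| * ke K * m.+1)%N.
Proof.
have key : forall x, x \in Sset ->
   [/\ x.1.1 \in C, (x.1.1 e <= m)%N, x.1.2 != e, (x.2 < x.1.1 x.1.2)%N &
       (x.1.1 e + x.1.1 x.1.2 <= k)%N].
  case=> [[a e'] u]; rewrite inE /= => /and3P [Ha' ne Hu].
  move: Ha'; rewrite /Aset inE => /andP [Ha Hm].
  split => //.
  have := sumC Ha; rewrite (sum_split2 _ (ne : e' != e)) => E.
  apply: leq_trans (eq_leq E); by rewrite [X in (X <= _)%N]addnC leq_addr.
rewrite -(card_in_imset (f := phi)).
  have -> : (#|C| * ke K * m.+1 = #|setX (setX C [set: 'I_(ke K)]) [set: 'I_m.+1]|)%N.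
    by rewrite !cardsX !cardsT !card_ord.
  apply: subset_leq_card; apply/subsetP => _ /imsetP [x Hx ->].
  have [Ha Hm ne Hu Hs] := key x Hx.
  rewrite !inE /= !andbT; apply/eqP.
  apply: (etrans _ (sumC Ha)).
  rewrite 2!(sum_split2 _ (ne : x.1.2 != e)).
  rewrite !ffunE eqxx (negbTE ne) eqxx.
  have Hk := ltn_ord x.2.
  have -> : (\sum_(z | (z != x.1.2) && (z != e)) fnew x.1.1 x.1.2 x.2 z =
             \sum_(z | (z != x.1.2) && (z != e)) x.1.1 z)%N.
    apply: eq_bigr => z /andP [n1 n2]; by rewrite ffunE (negbTE n1) (negbTE n2).
  move: Hs Hu Hk; set A1 := (x.1.1 e : nat); set A2 := (x.1.1 x.1.2 : nat); set U := (x.2 : nat).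
  move=> Hs Hu Hk.
  rewrite !inordK; try lia.
  apply/eqP; rewrite eqn_add2r; apply/eqP; lia.
move=> x y Hx Hy E.
have [Ha Hm ne Hu Hs] := key x Hx.
have [Hb Hm' ne' Hw Hs'] := key y Hy.
move: E Ha Hm ne Hu Hs Hb Hm' ne' Hw Hs'; clear Hx Hy.
case: x => [[a e1] u]; case: y => [[b e2] w]; rewrite /phi /= => -[E1 E2 E3].
subst e2 => Ha Hm ne Hu Hs Hb Hm' ne' Hw Hs'.
have Hae : (a e = b e :> nat).
  by move: (congr1 val E3); rewrite /= !inordK //; lia.
have Hk := ltn_ord u. have Hk' := ltn_ord w.
have Huw : u = w.
  apply: val_inj; move: (congr1 (fun f : FF => (f e1 : nat)) E1).
  by rewrite /= !ffunE (negbTE ne) eqxx /= !inordK.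
subst w.
have He1 : (a e1 = b e1 :> nat).
  move: (congr1 (fun f : FF => (f e : nat)) E1).
  rewrite /= !ffunE eqxx /=.
  move: Hs Hs' Hu Hw Hae.
  set a1 := (a e : nat); set a2 := (a e1 : nat); set b1 := (b e : nat); set b2 := (b e1 : nat); set U := (u : nat).
  move=> Hs Hs' Hu Hw Hae.
  rewrite !inordK; lia.
congr (_, _, _).
apply/ffunP => z; apply: val_inj.
case: (eqVneq z e) => [->|nze]; first exact: Hae.
case: (eqVneq z e1) => [->|nz1]; first exact: He1.
move: (congr1 (fun f : FF => (f z : nat)) E1).
by rewrite /= !ffunE (negbTE nze) (negbTE nz1).
Qed.

Lemma short_bound : ((k - m) * #|Aset| <= #|C| * ke K * m.+1)%N.
Proof. exact: leq_trans S_lower S_upper. Qed.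
End Short.

Section RSJ.
Local Open Scope ring_scope.

Definition cP (d l : nat) (H : fmgraph) (rH : fV H) : rat :=
  if pb (@ball_iso (P_graph d) (P_root d) l H rH) then 1 else 0.

Lemma avg_const (x : rat) (n : nat) : (0 < n)%N -> n%:R^-1 * (x *+ n) = x.
Proof. move=> n0; rewrite -mulr_natr; field; by rewrite pnatr_eq0 -lt0n. Qed.

Lemma VC_bound (K : kgraph) (k l : nat) (H : fmgraph) (rH : fV H) :
  (0 < #|compositions K k|)%N -> (0 < kv K + k)%N ->
  `|prob_ball_VC K k l rH - cP 2 l rH| <=
     (kv K + ke K * l.*2.+3)%N%:R / (kv K + k)%N%:R.
Proof.
move=> C0 N0.
rewrite /prob_ball_VC.
apply: le_trans (avg_bound (bd := fun _ => (kv K + ke K * l.*2.+3)%N%:R / (kv K + k)%N%:R) C0 _) _.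
  move=> a Ha.
  rewrite cardsE (card_coreV Ha).
  apply: le_trans (frac_bound (good := @goodC K k a l) (b := pb (@ball_iso (P_graph 2) (P_root 2) l H rH)) _ N0 (card_coreV Ha)) _.
    move=> [x|q] //= /andP [h1 h2].
    exact: ray_pb (VC_ray h1 h2).
  rewrite ler_pM2r ?invr_gt0 ?ltr0n // ler_nat.
  exact: card_badC.
by rewrite sumr_const avg_const.
Qed.

End RSJ.

Lemma card_sum_pred (T : finType) (P : pred T) : #|[set x | P x]| = (\sum_x (P x : nat))%N.
Proof.
rewrite cardsE -sum1_card big_mkcond /=; apply: eq_bigr => x _.
by rewrite unfold_in; case: (P x).
Qed.

Lemma sum_short (K : kgraph) (k m : nat) :
  (\sum_(a in compositions K k) #|[set e | (a e < m.+1)%N]| =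
   \sum_(e < ke K) #|Aset k e m|)%N.
Proof.
rewrite (eq_bigr (fun a : {ffun 'I_(ke K) -> 'I_k.+1} => \sum_e ((a e < m.+1)%N : nat))); last by move=> a _; rewrite card_sum_pred.
rewrite exchange_big /=; apply: eq_bigr => e _.
rewrite /Aset card_sum_pred big_mkcond /=; apply: eq_bigr => a _.
by rewrite ltnS; case: (a \in compositions K k).
Qed.

Lemma ke_pos (K : kgraph) : is_kernel K -> (0 < kv K)%N -> (0 < ke K)%N.
Proof.
move=> HK v0; have := HK (Ordinal v0); rewrite /kdeg => Hd.
have h1 : (#|[set e | (kends e).1 == Ordinal v0]| <= ke K)%N by rewrite -[X in (_ <= X)%N]card_ord max_card.
have h2 : (#|[set e | (kends e).2 == Ordinal v0]| <= ke K)%N by rewrite -[X in (_ <= X)%N]card_ord max_card.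
lia.
Qed.

Section RSK.
Local Open Scope ring_scope.

Lemma final_ineq (c kv D Sb Ss W q : rat) : 0 < c -> 0 < kv -> 0 < q ->
  Sb <= c * D + 2 * Ss -> q * Ss <= c * W ->
  c^-1 * (Sb / kv) <= (D + 2 * (W / q)) / kv.
Proof.
move=> c0 kv0 q0 h1 h2.
have E : c^-1 * (Sb / kv) = (Sb * q) / (c * q * kv) by field; rewrite !gt_eqF.
have E2 : (D + 2 * (W / q)) / kv = (c * (D * q + 2 * W)) / (c * q * kv) by field; rewrite !gt_eqF.
rewrite E E2 ler_pM2r ?invr_gt0 ?mulr_gt0 //.
have h3 : 0 <= (c * D + 2 * Ss - Sb) * q by apply: mulr_ge0 => //; [lra | apply: ltW].
nra.
Qed.

Lemma VK_bound (K : kgraph) (k l : nat) (H : fmgraph) (rH : fV H) :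
  is_kernel K -> (0 < kv K)%N -> (0 < #|compositions K k|)%N -> (l.*2.+2 < k)%N ->
  `|prob_ball_VK K k l rH - cP 3 l rH| <=
    (#|[set v : 'I_(kv K) | kdeg v != 3]|%:R +
      2 * ((ke K * ke K * l.*2.+3)%N%:R / (k - l.*2.+2)%N%:R)) / (kv K)%:R.
Proof.
move=> HK v0 C0 km.
have e0 : 'I_(ke K) := Ordinal (ke_pos HK v0).
rewrite /prob_ball_VK.
apply: le_trans (avg_bound (bd := fun a => #|[pred v | ~~ goodK a l v]|%:R / (kv K)%:R) C0 _) _.
  move=> a Ha.
  rewrite cardsE.
  apply: le_trans (frac_bound (good := @goodK K k a l) (b := pb (@ball_iso (P_graph 3) (P_root 3) l H rH)) _ v0 (card_ord _)) _.
    move=> v /andP [/eqP h1 /forallP h2].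
    apply: ray_pb (@VK_ray K k a l v e0 h1 _).
    move=> e He; rewrite addn3; apply: (implyP (h2 e)).
    by rewrite /incb; case: He => ->; rewrite eqxx ?orbT.
  by [].
rewrite -mulr_suml -natr_sum.
set m := l.*2.+2.
have Nb : (\sum_(a in compositions K k) #|[pred v | ~~ goodK a l v]| <=
           #|compositions K k| * #|[set v : 'I_(kv K) | kdeg v != 3]| + 2 * \sum_(e < ke K) #|Aset k e m|)%N.
  rewrite -sum_short big_distrr /= -sum_nat_const -big_split /=.
  apply: leq_sum => a _; exact: card_badK.
have Ns : ((k - m) * \sum_(e < ke K) #|Aset k e m| <= #|compositions K k| * (ke K * ke K * m.+1))%N.
  rewrite big_distrr /=.
  apply: (@leq_trans (\sum_(e < ke K) (#|compositions K k| * ke K * m.+1))%N).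
    by apply: leq_sum => e _; exact: short_bound.
  rewrite sum_nat_const card_ord; apply: eq_leq; by rewrite !mulnA (mulnC (ke K) #|compositions K k|).
apply: (@final_ineq _ _ _ _ (\sum_(e < ke K) #|Aset k e m|)%N%:R).
- by rewrite ltr0n.
- by rewrite ltr0n.
- by rewrite ltr0n subn_gt0.
- by move: Nb; rewrite -(ler_nat rat) natrD !natrM.
- by move: Ns; rewrite -(ler_nat rat) !natrM.
Qed.

End RSK.

Section RSL.
Local Open Scope ring_scope.

Lemma VC_final (x y z L eps : rat) : 0 < eps -> 0 <= L -> 0 < y -> y <= x ->
  x <= eps / (2 * (L + 1)) * z -> 0 <= z -> (y + x * L) / (y + z) < eps.
Proof.
move=> e0 L0 y0 yx xz z0.
have yz : 0 < y + z by lra.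
rewrite ltr_pdivrMr //.
have h1 : x * (L + 1) <= eps / (2 * (L + 1)) * z * (L + 1) by apply: ler_wpM2r => //; lra.
have h2 : eps / (2 * (L + 1)) * z * (L + 1) = eps * z / 2.
  by field; apply/negP => /eqP; lra.
have h3 : 0 < eps * y by apply: mulr_gt0.
have h4 : 0 <= eps * z by apply: mulr_ge0 => //; lra.
nra.
Qed.

Lemma VK_final (x y z D M q eps : rat) : 0 < eps -> 0 < y -> D <= eps / 4 * y ->
  x <= 2 * y -> 0 <= x -> 0 < M -> x <= eps / (32 * M) * z -> 0 < q -> z <= 2 * q ->
  (D + 2 * (x * x * M / q)) / y < eps.
Proof.
move=> e0 y0 hD x2y x0 M0 xz q0 zq.
rewrite ltr_pdivrMr //.
have h1 : x * x * M <= eps / 8 * y * q.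
  have a1 : x * x * M <= x * (2 * y) * M by apply: ler_wpM2r; [lra| apply: ler_wpM2l].
  have a2 : x * M <= eps / (32 * M) * z * M by apply: ler_wpM2r; lra.
  have a3 : eps / (32 * M) * z * M = eps * z / 32 by field; apply/negP => /eqP; lra.
  have a4 : 0 <= eps * y by apply: mulr_ge0; lra.
  have a5 : 0 <= 2 * y by lra.
  have a6 : x * M * (2 * y) <= eps * z / 32 * (2 * y) by apply: ler_wpM2r => //; lra.
  have a7 : eps * y * z <= eps * y * (2 * q) by apply: ler_wpM2l.
  nra.
have h2 : x * x * M / q <= eps / 8 * y.
  by rewrite ler_pdivrMr //.
have h3 : 0 < eps * y by apply: mulr_gt0.
lra.
Qed.

Lemma comp_nonempty (K : kgraph) (k : nat) : (0 < ke K)%N -> (0 < #|compositions K k|)%N.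
Proof.
move=> k0; pose e0 : 'I_(ke K) := Ordinal k0.
apply/card_gt0P; exists [ffun e => if e == e0 then (ord_max : 'I_k.+1) else ord0].
rewrite inE (bigD1 e0) //= ffunE eqxx /= big1 ?addn0 //.
by move=> e /negbTE ne; rewrite ffunE ne.
Qed.

End RSL.

Unset Implicit Arguments.
Local Open Scope ring_scope.

Theorem mainTheorem15 (K : nat -> kgraph) (k : nat -> nat) :
  (forall n, is_kernel (K n)) ->
  (forall n, (0 < kv (K n))%N) ->
  (forall eps : rat, 0 < eps -> exists N, forall n, (N <= n)%N ->
      (ke (K n))%:R <= eps * (k n)%:R) ->
  (forall eps : rat, 0 < eps -> exists N, forall n, (N <= n)%N ->
      `|(ke (K n))%:R - 3 / 2 * (kv (K n))%:R| <= eps * (kv (K n))%:R) ->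
  lwc_to_P (fun n => prob_ball_VC (K n) (k n)) 2 /\
  lwc_to_P (fun n => prob_ball_VK (K n) (k n)) 3.
Proof.
move=> HK Hpos Ho Hr.
have Hke : forall n, (0 < ke (K n))%N := fun n => ke_pos (HK n) (Hpos n).
have HC : forall n, (0 < #|compositions (K n) (k n)|)%N := fun n => comp_nonempty (k n) (Hke n).
have [N1 HN1] := Hr (1/2) ltac:(lra).
have R1 : forall n, (N1 <= n)%N ->
    (kv (K n))%:R <= (ke (K n))%:R :> rat /\ (ke (K n))%:R <= 2 * (kv (K n))%:R :> rat.
  move=> n /HN1; rewrite ler_norml => /andP [h1 h2]; split; lra.
have ke1 : forall n, 1 <= (ke (K n))%:R :> rat by move=> n; rewrite ler1n.
have kv0 : forall n, 0 < (kv (K n))%:R :> rat by move=> n; rewrite ltr0n.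
split.
- move=> H rH l eps e0.
  pose L : rat := (l.*2.+3)%:R.
  have L0 : 0 <= L by rewrite ler0n.
  have [N2 HN2] := Ho (eps / (2 * (L + 1))) ltac:(apply: divr_gt0 => //; lra).
  exists (maxn N1 N2) => n; rewrite geq_max => /andP [n1 n2].
  have B := VC_bound l rH (HC n) (ltn_addr _ (Hpos n)).
  apply: le_lt_trans B _.
  rewrite natrD natrM natrD.
  apply: VC_final => //.
  + by case: (R1 n n1).
  + exact: HN2.
- move=> H rH l eps e0.
  pose m := l.*2.+2.
  pose M : rat := (m.+1)%:R.
  have M0 : 0 < M by rewrite ltr0n.
  have [N3 HN3] := Hr (eps / 8) ltac:(apply: divr_gt0 => //; lra).
  have [N4 HN4] := Ho (1 / (2 * M)) ltac:(apply: divr_gt0 => //; lra).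
  have [N5 HN5] := Ho (eps / (32 * M)) ltac:(apply: divr_gt0 => //; lra).
  exists (maxn N1 (maxn N3 (maxn N4 N5))) => n; rewrite !geq_max => /and4P [n1 n3 n4 n5].
  have [kvke ke2kv] := R1 n n1.
  have h4 := HN4 n n4.
  have k2m : 2 * M <= (k n)%:R.
    have h1 := ke1 n.
    have e1 : 2 * M * (1 / (2 * M) * (k n)%:R) = (k n)%:R.
      by field; apply/negP => /eqP; lra.
    have h5 : 2 * M * (ke (K n))%:R <= 2 * M * (1 / (2 * M) * (k n)%:R) by apply: ler_wpM2l => //; lra.
    rewrite e1 in h5.
    nra.
  have km : (m < k n)%N.
    rewrite -(ltr_nat rat); rewrite /M in k2m; rewrite -natr1 in k2m.
    have : 0 <= m%:R :> rat by rewrite ler0n.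
    lra.
  have B := VK_bound (l := l) rH (HK n) (Hpos n) (HC n) km.
  apply: le_lt_trans B _.
  rewrite !natrM; apply: (@VK_final (ke (K n))%:R _ (k n)%:R _ M) => //.
  + have D := card_deg_bad (HK n).
    have := HN3 n n3; rewrite ler_norml => /andP [h1 h2].
    move: D; rewrite -(ler_nat rat) natrD !natrM => D.
    lra.
  + exact: HN5.
  + by rewrite ltr0n subn_gt0.
  + rewrite natrB ?(ltnW km) //.
    have hm : M = (l.*2.+2)%:R + 1 by rewrite /M natr1.
    lra.
Qed.
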